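(* Let $P$ be a polygon with vertex set $V$ and a non-empty dissection $D$, and let $d=\{\zeta,\eta\}\in D$ be such that $D = \{d\}\cup D_2$ where $D_2$ is a dissection of the subpolygon with vertex set $V_2 = \{\varepsilon \in V : \eta \le \varepsilon \le \zeta\}$. Let $U_1 = \{\varepsilon\in V : \zeta<\varepsilon<\eta\}$ and $U_2 = \{\varepsilon\in V : \eta<\varepsilon<\zeta\}$. If $\alpha \in U_1$, $\beta \in U_2$ and $\pi = (\pi_1,\dots,\pi_p) \in \mathcal{T}_{P,D}(\alpha,\beta)$, then $\pi_2 \in \{\zeta,\eta\}$.
   Context: A polygon is a finite set $V$ of at least three vertices with a cyclic order, pictured as a convex polygon in the plane with vertices anticlockwise. ''$a\le\varepsilon\le b$'' means $\varepsilon$ lies on the cyclic interval from $a$ to $b$ in the positive direction, endpoints included; ''$<$'' excludes the corresponding endpoint. A subpolygon is a subset of at least three vertices with induced cyclic order. A diagonal is a two-element subset of $V$ (edges included); non-edges are internal. Diagonals cross if they consist of four distinct vertices $\alpha,\beta,\gamma,\delta$ appearing cyclically as $\alpha,\gamma,\beta,\delta$ or $\alpha,\delta,\beta,\gamma$. A dissection is a set of pairwise non-crossing internal diagonals. For vertices $\pi_1\neq\pi_p$, a $T$-path from $\pi_1$ to $\pi_p$ w.r.t. $D$ is a tuple $(\pi_1,\dots,\pi_p)$ of vertices with: (i) $\{\pi_1,\pi_2\},\dots,\{\pi_{p-1},\pi_p\}$ pairwise different diagonals; (ii) no $\{\pi_i,\pi_{i+1}\}$ crosses a diagonal of $D$;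 (iii) each $\{\pi_{2j},\pi_{2j+1}\}$ lies in $D$, and these cross the segment $\{\pi_1,\pi_p\}$ at pairwise different points progressing monotonically from $\pi_1$ to $\pi_p$. $\mathcal{T}_{P,D}(\alpha,\beta)$ is the set of such paths from $\alpha$ to $\beta$. *)

(* Defs.v *)
From mathcomp Require Import all_boot.
Set Implicit Arguments. Unset Strict Implicit. Unset Printing Implicit Defensive.

(* A polygon with n vertices is modelled by 'I_n with the cyclic order
   0 -> 1 -> ... -> n-1 -> 0 (anticlockwise = increasing mod n). *)
Section Polygon.
Variable n : nat.
Implicit Types a b e : 'I_n.

Definition cdist a b : nat := (b + n - a) %% n.

(* a <= e <= b  (closed cyclic interval in positive direction) *)
Definition cle3 a e b : bool := cdist a e <= cdist a b.
(* a < e < b  (open cyclic interval) *)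
Definition clt3 a e b : bool := (0 < cdist a e) && (cdist a e < cdist a b).

Definition crossD (d f : {set 'I_n}) : Prop :=
  exists a b c e, [/\ d = [set a; b], f = [set c; e], uniq [:: a; b; c; e],
                     clt3 a c b & clt3 b e a].

Definition diagW (W : {set 'I_n}) (d : {set 'I_n}) : Prop :=
  #|d| = 2 /\ d \subset W.

Definition edgeW (W : {set 'I_n}) (d : {set 'I_n}) : Prop :=
  exists a b, [/\ d = [set a; b], a \in W, b \in W, a != b &
     [forall e in W, ~~ clt3 a e b]].

Definition internalW (W : {set 'I_n}) (d : {set 'I_n}) : Prop :=
  diagW W d /\ ~ edgeW W d.

Definition dissection (W : {set 'I_n}) (D : {set {set 'I_n}}) : Prop :=
  (forall d, d \in D -> internalW W d) /\
  (forall d f, d \in D -> f \in D -> ~ crossD d f).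

(* For diagonals e, f (of a dissection) both crossing the chord {a,b}:
   e meets the chord strictly before f when going from a to b, i.e.
   f lies (weakly) on the b-side of e and e <> f. *)
Definition before a b (e f : {set 'I_n}) : Prop :=
  exists x y u v, [/\ e = [set x; y], f = [set u; v] & e != f] /\ [/\
     [/\ clt3 a x b, clt3 b y a, clt3 a u b & clt3 b v a],
     cle3 x u b & cle3 b v y].

(* T-paths from a to b w.r.t. D, the path (pi_1,...,pi_p) being the
   sequence s (0-indexed: s`_0 = pi_1). step i = {pi_(i+1), pi_(i+2)}. *)
Definition tpath (D : {set {set 'I_n}}) a b (s : seq 'I_n) : Prop :=
  let step i := [set nth a s i; nth a s i.+1] in
  let m := (size s).-1 in
  [/\ a != b, 2 <= size s, nth a s 0 = a & last a s = b] /\ [/\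
      (forall i, i < m -> nth a s i != nth a s i.+1),
      (forall i j, i < m -> j < m -> i != j -> step i != step j),
      (forall i, i < m -> forall d, d \in D -> ~ crossD (step i) d) &
      (* (iii) even steps {pi_2j, pi_2j+1} lie in D, cross {pi_1, pi_p},
         at points progressing monotonically from pi_1 to pi_p *)
      [/\ (forall i, i < m -> odd i -> step i \in D /\ crossD (step i) [set a; b]) &
          (forall i j, odd i -> odd j -> i < j -> j < m -> before a b (step i) (step j))]].

End Polygon.

(* Main.v *)
Require Import Defs.
From mathcomp Require Import all_boot zify.
Set Implicit Arguments.

Lemma cdist_spec n (a b : 'I_n) :
  (a <= b /\ cdist a b = b - a) \/ (b < a /\ cdist a b = b + n - a).
Proof.
rewrite /cdist; have := ltn_ord a; have := ltn_ord b => hb ha.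
case: (leqP a b) => h; [left|right]; split => //.
  by rewrite -addnBAC // modnDr modn_small //; lia.
by rewrite modn_small //; lia.
Qed.

Ltac cyc :=
  unfold clt3, cle3 in *;
  repeat match goal with
  | H : context [@cdist ?n ?x ?y] |- _ => move: H
  end;
  repeat match goal with
  | |- context [@cdist ?n ?x ?y] =>
      have := @cdist_spec n x y; have := ltn_ord x; have := ltn_ord y;
      move: (@cdist n x y) => ? ? ? [[? ?]|[? ?]]
  end;
  rewrite -?val_eqE /=; intros; subst; lia.

Lemma L3 n (zeta eta p : 'I_n) : clt3 zeta p eta -> ~~ cle3 eta p zeta.
Proof. move=> h; move: h; cyc. Qed.

Lemma L2 n (zeta eta p : 'I_n) : zeta != eta -> ~~ clt3 eta p zeta -> p != zeta -> p != eta -> clt3 zeta p eta.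
Proof. move=> h1 h2 h3 h4; move: h1 h2 h3 h4; cyc. Qed.

Lemma L1 n (zeta eta alpha p : 'I_n) : zeta != eta -> clt3 zeta alpha eta -> clt3 eta p zeta ->
  [/\ clt3 alpha eta p, clt3 p zeta alpha & uniq [:: alpha; p; eta; zeta]].
Proof.
move=> h1 h2 h3; split; first (by move: h1 h2 h3; cyc); first (by move: h1 h2 h3; cyc).
rewrite /= !inE !negb_or.
move: h1 h2 h3; cyc.
Qed.

Theorem lemma3p7 (n : nat) (D D2 : {set {set 'I_n}}) (zeta eta : 'I_n)
    (alpha beta : 'I_n) (s : seq 'I_n) :
  3 <= n ->
  dissection [set: 'I_n] D ->
  D != set0 ->
  zeta != eta ->
  [set zeta; eta] \in D ->
  D = [set zeta; eta] |: D2 ->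
  3 <= #|[set e : 'I_n | cle3 eta e zeta]| ->
  dissection [set e : 'I_n | cle3 eta e zeta] D2 ->
  clt3 zeta alpha eta ->
  clt3 eta beta zeta ->
  tpath D alpha beta s ->
  nth alpha s 1 \in [set zeta; eta].
Proof.
move=> n3 [Dint Dnc] _ zne dD DE _ [D2int _] ha hb
  [[abne sz2 s0 slast] [stepne _ stepnc [stepD _]]].
set p := nth alpha s 1.
have U2 : ~ clt3 eta p zeta.
  move=> hp; apply: (stepnc 0 _ [set zeta; eta] dD); first by case: (size s) sz2 => [|[|k]].
  case: (@L1 _ zeta eta alpha p zne ha hp) => c1 c2 u.
  exists alpha, p, eta, zeta; split => //; first by rewrite s0.
  by rewrite setUC.
case: (boolP (p \in [set zeta; eta])) => // pn.
move: (pn); rewrite !inE negb_or => /andP [pz pe].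
have hp := @L2 _ zeta eta p zne (introN idP U2) pz pe.
have sz3 : 1 < (size s).-1.
  rewrite ltnNge; apply/negP => h.
  have e : (size s).-1 = 1 by lia.
  have eb : beta = p by rewrite -slast -nth_last e.
  by apply: U2; rewrite -eb.
have [hD _] := stepD 1 sz3 isT.
move: hD; rewrite DE in_setU1 => /orP [/eqP e|].
  by move: pn; rewrite -e /p !inE eqxx.
move=> /D2int [[_ sub] _].
have : p \in [set e : 'I_n | cle3 eta e zeta].
  by apply: (subsetP sub); rewrite !inE eqxx.
by rewrite inE (negbTE (@L3 _ zeta eta p hp)).
Qed.
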